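(* Let $A,B$ be unital Banach algebras and let $X$ be a Banach space which is simultaneously a left Banach $A$-module that is a left function module over $A$, and a right Banach $B$-module that is a right function module over $B$ (no compatibility between the two actions is assumed). Then $(a\cdot x)\cdot b=a\cdot(x\cdot b)$ for all $a\in A$, $x\in X$, $b\in B$; i.e. the two actions make $X$ an $A$-$B$-bimodule.
   Context: A unital Banach algebra has a unit of norm 1. A left Banach $A$-module is a Banach space $X$ with left action satisfying $1\cdot x=x$ and $\|a\cdot x\|\le\|a\|\|x\|$; right Banach modules analogously. $X$ is a left (resp. right) function module over $A$ (resp. $B$) if there exist a compact Hausdorff space $K$, a linear isometry $i\colon X\to C(K)$ and a contractive unital homomorphism $\theta$ from $A$ (resp. $B$) to $C(K)$ with $i(a\cdot x)=\theta(a)i(x)$ (resp. $i(x\cdot b)=i(x)\theta(b)$). *)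

(* Defs.v *)
From HB Require Import structures.
From mathcomp Require Import all_boot all_order all_algebra.
From mathcomp Require Import all_classical all_reals all_analysis.
From mathcomp Require Import complex.
Set Implicit Arguments. Unset Strict Implicit. Unset Printing Implicit Defensive.
Import Order.TTheory GRing.Theory Num.Theory.
Import numFieldTopology.Exports numFieldNormedType.Exports.
Local Open Scope ring_scope.
Local Open Scope complex_scope.

(* The complex field over R, packaged as a numClosedFieldType so that it
   carries its canonical (norm) topology from MathComp-Analysis. *)
Definition Cplx (R : realType) : numClosedFieldType := R[i].

Definition unital_banach_algebra (R : realType) (A : completeNormedModType (Cplx R))
    (mul : A -> A -> A) (one : A) : Prop :=
  [/\ associative mul /\ left_id one mul /\ right_id one mul,
      (forall (k : Cplx R) (a b c : A), mul (k *: a + b) c = k *: mul a c + mul b c),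
      (forall (k : Cplx R) (a b c : A), mul c (k *: a + b) = k *: mul c a + mul c b),
      `|one| = 1 &
      (forall a b : A, `|mul a b| <= `|a| * `|b|)].

Definition left_banach_module (R : realType) (A X : completeNormedModType (Cplx R))
    (mul : A -> A -> A) (one : A) (act : A -> X -> X) : Prop :=
  [/\ (forall (k : Cplx R) (a a' : A) (x : X), act (k *: a + a') x = k *: act a x + act a' x),
      (forall (k : Cplx R) (a : A) (x y : X), act a (k *: x + y) = k *: act a x + act a y),
      (forall (a a' : A) (x : X), act (mul a a') x = act a (act a' x)),
      (forall x : X, act one x = x) &
      (forall (a : A) (x : X), `|act a x| <= `|a| * `|x|)].

Definition right_banach_module (R : realType) (B X : completeNormedModType (Cplx R))
    (mul : B -> B -> B) (one : B) (act : X -> B -> X) : Prop :=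
  [/\ (forall (k : Cplx R) (b b' : B) (x : X), act x (k *: b + b') = k *: act x b + act x b'),
      (forall (k : Cplx R) (b : B) (x y : X), act (k *: x + y) b = k *: act x b + act y b),
      (forall (b b' : B) (x : X), act x (mul b b') = act (act x b) b'),
      (forall x : X, act x one = x) &
      (forall (b : B) (x : X), `|act x b| <= `|x| * `|b|)].

(* i : X -> C(K) is a linear isometry, C(K) carrying the sup norm:
   each i x is continuous, i is linear and sup_k |i x k| = ||x||. *)
Definition linear_isometry_CK (R : realType) (X : completeNormedModType (Cplx R))
    (K : topologicalType) (i : X -> K -> Cplx R) : Prop :=
  [/\ (forall x : X, continuous (i x)),
      (forall (c : Cplx R) (x y : X), i (c *: x + y) = (fun k => c * i x k + i y k)),
      (forall (x : X) (k : K), `|i x k| <= `|x|) &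
      (forall (x : X) (e : Cplx R), 0 < e -> exists k : K, `|x| - e < `|i x k|)].

Definition contractive_unital_hom_CK (R : realType) (A : completeNormedModType (Cplx R))
    (mul : A -> A -> A) (one : A) (K : topologicalType) (theta : A -> K -> Cplx R) : Prop :=
  [/\ (forall a : A, continuous (theta a)),
      (forall (c : Cplx R) (a b : A), theta (c *: a + b) = (fun k => c * theta a k + theta b k)),
      (forall a b : A, theta (mul a b) = (fun k => theta a k * theta b k)),
      theta one = (fun _ => 1) &
      (forall (a : A) (k : K), `|theta a k| <= `|a|)].

Definition left_function_module (R : realType) (A X : completeNormedModType (Cplx R))
    (mul : A -> A -> A) (one : A) (act : A -> X -> X) : Prop :=
  exists K : topologicalType,
    [/\ compact [set: K], hausdorff_space K &
      exists (i : X -> K -> Cplx R) (theta : A -> K -> Cplx R),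
        [/\ linear_isometry_CK i, contractive_unital_hom_CK mul one theta &
            forall (a : A) (x : X), i (act a x) = (fun k => theta a k * i x k)]].

Definition right_function_module (R : realType) (B X : completeNormedModType (Cplx R))
    (mul : B -> B -> B) (one : B) (act : X -> B -> X) : Prop :=
  exists K : topologicalType,
    [/\ compact [set: K], hausdorff_space K &
      exists (i : X -> K -> Cplx R) (theta : B -> K -> Cplx R),
        [/\ linear_isometry_CK i, contractive_unital_hom_CK mul one theta &
            forall (b : B) (x : X), i (act x b) = (fun k => i x k * theta b k)]].

(* Main.v *)
Require Import Defs.
From HB Require Import structures.
From mathcomp Require Import all_boot all_order all_algebra.
From mathcomp Require Import all_classical all_reals all_analysis.
From mathcomp Require Import complex.
From mathcomp.algebra_tactics Require Import ring lra.
Set Implicit Arguments. Unset Strict Implicit. Unset Printing Implicit Defensive.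
Import Order.TTheory GRing.Theory Num.Theory.
Import numFieldTopology.Exports numFieldNormedType.Exports.
Local Open Scope ring_scope.
Local Open Scope complex_scope.
Local Open Scope classical_set_scope.

Section Helpers.
Variable R : realType.
Local Notation C := (R[i]).
Lemma rcD (a b : R) : (a + b)%:C = a%:C + b%:C :> C.
Proof. exact: rmorphD. Qed.
Lemma rcM (a b : R) : (a * b)%:C = a%:C * b%:C :> C.
Proof. exact: rmorphM. Qed.
Lemma rcN (a : R) : (- a)%:C = - a%:C :> C.
Proof. exact: rmorphN. Qed.
Lemma rc0 : (0:R)%:C = 0 :> C. Proof. exact: rmorph0. Qed.
Lemma rc1 : (1:R)%:C = 1 :> C. Proof. exact: rmorph1. Qed.
Lemma ge0c (c : C) : 0 <= c -> c = (complex.Re c)%:C.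
Proof. rewrite lecE => /andP[/eqP H _]; case: c H => a b /= H. by rewrite H. Qed.

Lemma inf_le_img (T : Type) (A : set T) (F : T -> R) (b : R) t :
  (forall s, A s -> b <= F s) -> A t -> inf [set F s | s in A] <= F t.
Proof.
move=> hb At.
have hl : has_lbound [set F s | s in A] by exists b => _ [s As <-]; exact: hb.
by apply: (ge_inf hl); exists t.
Qed.

Lemma le_inf_img (T : Type) (A : set T) (F : T -> R) x :
  A !=set0 -> (forall s, A s -> x <= F s) -> x <= inf [set F s | s in A].
Proof.
move=> [t At] h; apply: lb_le_inf; first by exists (F t), t.
by move=> _ [s As <-]; exact: h.
Qed.

Lemma le_sup_img (T : Type) (A : set T) (F : T -> R) (b : R) t :
  (forall s, A s -> F s <= b) -> A t -> F t <= sup [set F s | s in A].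
Proof.
move=> hb At.
have hl : has_ubound [set F s | s in A] by exists b => _ [s As <-]; exact: hb.
by apply: (ub_le_sup hl); exists t.
Qed.

Lemma sup_le_img (T : Type) (A : set T) (F : T -> R) x :
  A !=set0 -> (forall s, A s -> F s <= x) -> sup [set F s | s in A] <= x.
Proof.
move=> [t At] h; apply: ge_sup; first by exists (F t), t.
by move=> _ [s As <-]; exact: h.
Qed.
End Helpers.

Section Sublin.
Variable R : realType.
Local Notation C := (R[i]).
Variable V : lmodType C.

Definition sublin (p : V -> R) :=
  (forall x y, p (x + y) <= p x + p y) /\
  (forall (r : R) x, 0 <= r -> p (r%:C *: x) = r * p x).
Definition linr (u : V -> R) :=
  (forall x y, u (x + y) = u x + u y) /\ (forall (r : R) x, u (r%:C *: x) = r * u x).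

Lemma sublin0 p : sublin p -> p 0 = 0.
Proof. by case=> _ H; have := H 0 0 (lexx 0); rewrite rc0 scale0r mul0r. Qed.

Lemma sublin_lb p x : sublin p -> - p (- x) <= p x.
Proof.
move=> hp; case: (hp) => hD _; have := hD x (- x).
rewrite subrr (sublin0 hp) => h; lra.
Qed.

Lemma linr0 u : linr u -> u 0 = 0.
Proof. by case=> _ H; have := H 0 0; rewrite rc0 scale0r mul0r. Qed.

Lemma linrN u x : linr u -> u (- x) = - u x.
Proof.
move=> hu; case: (hu) => hD _; apply/eqP; rewrite -addr_eq0 -hD addNr.
by rewrite (linr0 hu).
Qed.

Lemma linrB u x y : linr u -> u (x - y) = u x - u y.
Proof. by move=> hu; case: (hu) => hD _; rewrite hD linrN. Qed.

Lemma linr_sublin u : linr u -> sublin u.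
Proof. by case=> hD hH; split=> [x y|r x _]; rewrite ?hD ?hH. Qed.

Definition shft (p : V -> R) (y : V) (x : V) : R :=
  inf [set p (x + t%:C *: y) - t * p y | t in [set t : R | 0 <= t]].

Section Shft.
Variables (p : V -> R) (hp : sublin p) (y : V).

Lemma shft_lbd x t : 0 <= t -> - p (- x) <= p (x + t%:C *: y) - t * p y.
Proof.
move=> t0; case: (hp) => hD hH.
have := hD (x + t%:C *: y) (- x); rewrite addrC addKr (hH _ _ t0) => h.
lra.
Qed.

Lemma shft_le x t : 0 <= t -> shft p y x <= p (x + t%:C *: y) - t * p y.
Proof.
move=> t0; apply: (inf_le_img (b := - p (- x))); last exact: t0.
by move=> s s0; exact: shft_lbd.
Qed.

Lemma shft_ge x b : (forall t, 0 <= t -> b <= p (x + t%:C *: y) - t * p y) -> b <= shft p y x.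
Proof. by move=> h; apply: le_inf_img; [exists 0; exact: lexx|exact: h]. Qed.

Lemma shft_lep x : shft p y x <= p x.
Proof. by have := shft_le x (lexx 0); rewrite rc0 scale0r addr0 mul0r subr0. Qed.

Lemma shft_sublin : sublin (shft p y).
Proof.
case: (hp) => hD hH; split.
- move=> x1 x2.
  have h1 : forall t1 t2, 0 <= t1 -> 0 <= t2 ->
     shft p y (x1 + x2) <= (p (x1 + t1%:C *: y) - t1 * p y) + (p (x2 + t2%:C *: y) - t2 * p y).
    move=> t1 t2 t10 t20.
    have := shft_le (x1 + x2) (addr_ge0 t10 t20).
    have := hD (x1 + t1%:C *: y) (x2 + t2%:C *: y).
    have -> : x1 + t1%:C *: y + (x2 + t2%:C *: y) = x1 + x2 + (t1 + t2)%:C *: y.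
      by rewrite rcD scalerDl; rewrite addrACA.
    move=> ha hb; lra.
  have h2 : forall t2, 0 <= t2 -> shft p y (x1 + x2) - (p (x2 + t2%:C *: y) - t2 * p y) <= shft p y x1.
    move=> t2 t20; apply: shft_ge => t1 t10; have := h1 t1 t2 t10 t20; lra.
  have h3 : shft p y (x1 + x2) - shft p y x1 <= shft p y x2.
    apply: shft_ge => t2 t20; have := h2 t2 t20; lra.
  lra.
- move=> r x r0.
  have [->|rpos] := eqVneq r 0.
    rewrite rc0 scale0r mul0r; apply/eqP; rewrite eq_le; apply/andP; split.
      by have := shft_le 0 (lexx 0); rewrite rc0 scale0r addr0 mul0r subr0 (sublin0 hp).
    apply: shft_ge => t t0; rewrite add0r (hH _ _ t0); lra.
  have r0' : 0 < r by rewrite lt_neqAle eq_sym rpos r0.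
  apply/eqP; rewrite eq_le; apply/andP; split.
  + rewrite -ler_pdivrMl //; apply: shft_ge => t t0.
    have := shft_le (r%:C *: x) (mulr_ge0 r0 t0).
    rewrite rcM -scalerA -scalerDr (hH _ _ r0) => h.
    rewrite ler_pdivrMl //; lra.
  + apply: shft_ge => t t0.
    have t0' : 0 <= t / r by rewrite divr_ge0.
    have h := shft_le x t0'.
    have -> : r%:C *: x + t%:C *: y = r%:C *: (x + (t / r)%:C *: y).
      by rewrite scalerDr scalerA -rcM mulrCA divff ?mulr1.
    rewrite (hH _ _ r0).
    have -> : t * p y = r * ((t / r) * p y) by rewrite mulrA mulrCA divff ?mulr1.
    rewrite -mulrBr; rewrite ler_pM2l //.
Qed.

End Shft.
End Sublin.

Section MinSub.
Variable R : realType.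
Local Notation C := (R[i]).
Variable V : lmodType C.

Definition ple (p q : V -> R) := forall x, p x <= q x.
Definition infA (A : set (V -> R)) (x : V) : R := inf [set p x | p in A].

Lemma chain_inf (Q : V -> R) (A : set (V -> R)) :
  sublin Q -> (forall p, A p -> sublin p /\ ple p Q) -> A !=set0 ->
  (forall p q, A p -> A q -> ple p q \/ ple q p) ->
  [/\ sublin (infA A), ple (infA A) Q, (forall p, A p -> ple (infA A) p) &
      (forall w, (forall p, A p -> ple w p) -> ple w (infA A))].
Proof.
move=> hQ hA [p0 Ap0] hch.
have lb : forall x p, A p -> - Q (- x) <= p x.
  move=> x p Ap; have [hp hpQ] := hA p Ap.
  have := sublin_lb x hp; have := hpQ (- x); lra.
have le1 : forall p, A p -> ple (infA A) p.
  move=> p Ap x; apply: (inf_le_img (b := - Q (- x))) => // q Aq; exact: lb.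
have ge1 : forall w, (forall p, A p -> ple w p) -> ple w (infA A).
  move=> w hw x; apply: le_inf_img; first by exists p0.
  by move=> q Aq; exact: hw.
split => //.
- split.
  + move=> x y.
    have h1 : forall p1 p2, A p1 -> A p2 -> infA A (x + y) <= p1 x + p2 y.
      move=> p1 p2 A1 A2; have [h1 _] := hA p1 A1; have [h2 _] := hA p2 A2.
      case: h1 => hD1 _; case: h2 => hD2 _.
      case: (hch p1 p2 A1 A2) => hle.
      * have := le1 p1 A1 (x + y); have := hD1 x y; have := hle y; lra.
      * have := le1 p2 A2 (x + y); have := hD2 x y; have := hle x; lra.
    have h2 : forall p2, A p2 -> infA A (x + y) - p2 y <= infA A x.
      move=> p2 A2; apply: le_inf_img; first by exists p0.
      by move=> p1 A1; have := h1 p1 p2 A1 A2; lra.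
    have h3 : infA A (x + y) - infA A x <= infA A y.
      apply: le_inf_img; first by exists p0.
      by move=> p2 A2; have := h2 p2 A2; lra.
    lra.
  + move=> r x r0.
    have [->|rpos] := eqVneq r 0.
      rewrite rc0 scale0r mul0r; apply/eqP; rewrite eq_le; apply/andP; split.
        have := le1 p0 Ap0 0; have [hp _] := hA p0 Ap0; by rewrite (sublin0 hp).
      apply: le_inf_img; first by exists p0.
      by move=> q Aq; have [hq _] := hA q Aq; rewrite (sublin0 hq).
    have r0' : 0 < r by rewrite lt_neqAle eq_sym rpos r0.
    apply/eqP; rewrite eq_le; apply/andP; split.
    * rewrite -ler_pdivrMl //; apply: le_inf_img; first by exists p0.
      move=> q Aq; have [[_ hH] _] := hA q Aq.
      have := le1 q Aq (r%:C *: x); rewrite (hH _ _ r0) => h.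
      by rewrite ler_pdivrMl.
    * apply: le_inf_img; first by exists p0.
      move=> q Aq; have [[_ hH] _] := hA q Aq.
      rewrite (hH _ _ r0) ler_pM2l //; exact: le1.
- move=> x; have := le1 p0 Ap0 x; have [_ h] := hA p0 Ap0; have := h x; lra.
Qed.

Lemma zorn_min (Q : V -> R) (Phi : (V -> R) -> Prop) p0 :
  sublin Q -> (forall p, Phi p -> sublin p /\ ple p Q) ->
  (forall A, A `<=` Phi -> A !=set0 ->
     (forall p q, A p -> A q -> ple p q \/ ple q p) -> Phi (infA A)) ->
  Phi p0 ->
  exists p, Phi p /\ forall q, Phi q -> ple q p -> ple p q.
Proof.
move=> hQ hPhi hch Pp0.
pose T := {p : V -> R | Phi p}.
pose Rl := fun s t : T => `[< ple (sval t) (sval s) >].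
have t0 : T := exist _ p0 Pp0.
have [] := @ZL_preorder T t0 Rl.
- by move=> t; apply/asboolP => x.
- move=> r s t /asboolP h1 /asboolP h2; apply/asboolP => x.
  exact: le_trans (h2 x) (h1 x).
- move=> A hA.
  case: (pselect (A !=set0)) => [[a Aa]|ne]; last first.
    by exists t0 => s As; exfalso; apply: ne; exists s.
  pose B := [set sval s | s in A].
  have PB : B `<=` Phi by move=> _ [s _ <-]; exact: (svalP s).
  have hchB : forall p q, B p -> B q -> ple p q \/ ple q p.
    move=> _ _ [s As <-] [t At <-].
    by case: (hA s t As At) => /asboolP h; [right|left].
  have PI := hch B PB (ex_intro _ (sval a) (ex_intro2 _ _ a Aa erefl)) hchB.
  exists (exist _ (infA B) PI) => s As; apply/asboolP => x /=.
  have [_ _ h _] := chain_inf hQ (fun p Bp => hPhi p (PB p Bp))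
     (ex_intro _ (sval a) (ex_intro2 _ _ a Aa erefl)) hchB.
  by apply: h; exists s.
- move=> [p Pp] hmax; exists p; split => // q Pq hqp.
  have := hmax (exist _ q Pq); rewrite /Rl /= => H.
  by have /asboolP := H (asboolT hqp).
Qed.

Lemma HB0 (q : V -> R) : sublin q -> exists L, linr L /\ ple L q.
Proof.
move=> hq.
have [p [[hp hpq] hmin]] := @zorn_min q (fun p => sublin p /\ ple p q) q hq
  (fun p h => h) (fun A hA ne hch => let: And4 h1 h2 _ _ := chain_inf hq (fun p Ap => hA p Ap) ne hch in conj h1 h2)
  (conj hq (fun x => lexx _)).
have key : forall x y, p x + p y <= p (x + y).
  move=> x y.
  have hs : sublin (shft p y) := shft_sublin hp y.
  have h1 : ple (shft p y) q by move=> z; exact: le_trans (shft_lep hp y z) (hpq z).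
  have := hmin _ (conj hs h1) (shft_lep hp y) x.
  have := shft_le hp y x (ler01); rewrite rc1 scale1r mul1r; lra.
case: (hp) => hD hH.
have hA : forall x y, p (x + y) = p x + p y.
  by move=> x y; apply/eqP; rewrite eq_le hD key.
have hN : forall x, p (- x) = - p x.
  move=> x; have := hA x (- x); rewrite subrr (sublin0 hp); lra.
exists p; split => //; split => // r x.
have [r0|r0] := leP 0 r; first exact: hH.
have -> : r%:C *: x = - ((- r)%:C *: x) by rewrite rcN scaleNr opprK.
rewrite hN hH; first lra.
lra.
Qed.
End MinSub.

Section Face.
Variable R : realType.
Local Notation C := (R[i]).
Variable V : lmodType C.

Definition Fq (q : V -> R) (u : V -> R) := linr u /\ ple u q.
Definition face (N : V -> R) (F : (V -> R) -> Prop) :=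
  forall u d, F u -> Fq N (fun x => u x + d x) -> Fq N (fun x => u x - d x) ->
    F (fun x => u x + d x) /\ F (fun x => u x - d x).

Lemma Fq_shft (q : V -> R) x u : sublin q ->
  Fq (shft q x) u <-> Fq q u /\ q x <= u x.
Proof.
move=> hq; split.
- move=> [hu hle]; split; first by split => // y; exact: le_trans (hle y) (shft_lep hq x y).
  have := hle (- x); have := shft_le hq x (- x) ler01.
  rewrite rc1 scale1r mul1r addNr (sublin0 hq) (linrN _ hu); lra.
- move=> [[hu hle] hx]; split => // y; apply: shft_ge => t t0.
  have e : y = (y + t%:C *: x) - t%:C *: x by rewrite addrK.
  rewrite {1}e (linrB _ _ hu); case: (hu) => _ hH; rewrite hH.
  have := hle (y + t%:C *: x); have : t * q x <= t * u x by rewrite ler_wpM2l.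
  lra.
Qed.

Lemma face_shft (N q : V -> R) x : sublin q -> face N (Fq q) -> face N (Fq (shft q x)).
Proof.
move=> hq hf u d /(Fq_shft _ _ hq) [hu hx] hp hm.
have [hp' hm'] := hf u d hu hp hm.
split; apply/(Fq_shft _ _ hq); split => //.
- case: hm' => _ h; have := h x; lra.
- case: hp' => _ h; have := h x; lra.
Qed.

Lemma exists_extreme (N : V -> R) z : sublin N ->
  exists u, Fq N u /\
    (forall d, Fq N (fun x => u x + d x) -> Fq N (fun x => u x - d x) -> forall x, d x = 0) /\
    N z <= u z.
Proof.
move=> hN.
pose Phi := fun q => [/\ sublin q, ple q N, q (- z) <= - N z & face N (Fq q)].
have hPhi : forall p, Phi p -> sublin p /\ ple p N by move=> p [].
have P0 : Phi (shft N z).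
  split.
  - exact: shft_sublin.
  - exact: shft_lep.
  - by have := shft_le hN z (- z) ler01; rewrite rc1 scale1r mul1r addNr (sublin0 hN) sub0r.
  - apply: face_shft => // u d hu hp hm; by [].
have hch : forall A, A `<=` Phi -> A !=set0 ->
     (forall p q, A p -> A q -> ple p q \/ ple q p) -> Phi (infA A).
  move=> A hA ne hc.
  have [h1 h2 h3 h4] := chain_inf hN (fun p Ap => hPhi p (hA p Ap)) ne hc.
  have FI : forall u, linr u -> (Fq (infA A) u <-> forall p, A p -> Fq p u).
    move=> u hu; split.
    - by move=> [_ hle] p Ap; split => // x; exact: le_trans (hle x) (h3 p Ap x).
    - by move=> hall; split => //; apply: h4 => p Ap; case: (hall p Ap).
  split => //.
  - case: ne => p Ap; have [_ _ hz _] := hA p Ap; have := h3 p Ap (- z); lra.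
  - move=> u d hu hp hm.
    have hu' := (FI u hu.1).1 hu.
    split; [apply/(FI _ hp.1) | apply/(FI _ hm.1)] => p Ap;
      have [_ _ _ hf] := hA p Ap; have [f1 f2] := hf u d (hu' p Ap) hp hm; by [].
have [q [[hq hqN hqz hqf] hmin]] := zorn_min hN hPhi hch P0.
have [u [hu huq]] := HB0 hq.
have allx : forall w, Fq q w -> forall x, w x = q x.
  move=> w hw x.
  have Px : Phi (shft q x).
    split.
    - exact: shft_sublin.
    - by move=> y; exact: le_trans (shft_lep hq x y) (hqN y).
    - by have := shft_lep hq x (- z); lra.
    - exact: face_shft.
  have := hmin _ Px (shft_lep hq x) => hle.
  have /(Fq_shft _ _ hq) [[_ h1] h2] : Fq (shft q x) w.
    by split; [exact: hw.1 | move=> y; exact: le_trans (hw.2 y) (hle y)].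
  by apply/eqP; rewrite eq_le h1 h2.
exists u; split; first by split => // x; exact: le_trans (huq x) (hqN x).
split.
- move=> d hp hm x.
  have [hp' _] := hqf u d (conj hu huq) hp hm.
  have := allx _ hp' x; have := allx _ (conj hu huq) x; lra.
- have := huq (- z); rewrite (linrN _ hu); lra.
Qed.
End Face.

Section Ext.
Variable R : realType.
Local Notation C := (R[i]).
Variables (V W : lmodType C) (j : W -> V).
Hypothesis jD : forall a b, j (a + b) = j a + j b.
Hypothesis jZ : forall (r : R) a, j (r%:C *: a) = r%:C *: j a.

Lemma j0 : j 0 = 0.
Proof. by apply: (addrI (j 0)); rewrite -jD !addr0. Qed.

Lemma jN a : j (- a) = - j a.
Proof. by apply/eqP; rewrite -addr_eq0 -jD addNr j0. Qed.

Lemma HB_ext (Q : V -> R) (u : W -> R) : sublin Q -> linr u -> (forall w, u w <= Q (j w)) ->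
  exists L, [/\ linr L, ple L Q & forall w, L (j w) = u w].
Proof.
move=> hQ hu huQ.
case: (hQ) => hD hH; case: (hu) => uD uH.
pose Q' := fun xi => inf [set Q (xi + j w) - u w | w in [set: W]].
have lbd : forall xi w, - Q (- xi) <= Q (xi + j w) - u w.
  move=> xi w; have := hD (xi + j w) (- xi); rewrite addrC addKr.
  have := huQ w; lra.
have Q'le : forall xi w, Q' xi <= Q (xi + j w) - u w.
  by move=> xi w; apply: (inf_le_img (b := - Q (- xi))) => // w' _; exact: lbd.
have Q'ge : forall xi b, (forall w, b <= Q (xi + j w) - u w) -> b <= Q' xi.
  by move=> xi b h; apply: le_inf_img; [exists 0 | move=> w _; exact: h].
have u0 := linr0 hu.
have hQ' : sublin Q'.
  split.
  - move=> x1 x2.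
    have h1 : forall w1 w2, Q' (x1 + x2) <= (Q (x1 + j w1) - u w1) + (Q (x2 + j w2) - u w2).
      move=> w1 w2; have := Q'le (x1 + x2) (w1 + w2).
      have := hD (x1 + j w1) (x2 + j w2).
      rewrite addrACA -jD uD; lra.
    have h2 : forall w2, Q' (x1 + x2) - (Q (x2 + j w2) - u w2) <= Q' x1.
      by move=> w2; apply: Q'ge => w1; have := h1 w1 w2; lra.
    have h3 : Q' (x1 + x2) - Q' x1 <= Q' x2.
      by apply: Q'ge => w2; have := h2 w2; lra.
    lra.
  - move=> r x r0.
    have [->|rpos] := eqVneq r 0.
      rewrite rc0 scale0r mul0r; apply/eqP; rewrite eq_le; apply/andP; split.
        by have := Q'le 0 0; rewrite j0 addr0 u0 subr0 (sublin0 hQ).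
      apply: Q'ge => w; rewrite add0r; have := huQ w; lra.
    have r0' : 0 < r by rewrite lt_neqAle eq_sym rpos r0.
    apply/eqP; rewrite eq_le; apply/andP; split.
    + rewrite -ler_pdivrMl //; apply: Q'ge => w.
      have := Q'le (r%:C *: x) (r%:C *: w).
      rewrite jZ -scalerDr (hH _ _ r0) uH => h.
      rewrite ler_pdivrMl //; lra.
    + apply: Q'ge => w.
      have := Q'le x ((r^-1)%:C *: w).
      have -> : r%:C *: x + j w = r%:C *: (x + j ((r^-1)%:C *: w)).
        by rewrite jZ scalerDr scalerA -rcM divff ?scale1r // rpos.
      rewrite (hH _ _ r0) uH => h.
      by have := ler_wpM2l r0 h; rewrite mulrBr mulrA divff // mul1r.
have [L [hL hLQ']] := HB0 hQ'.
exists L; split => //.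
- move=> xi; have := hLQ' xi; have := Q'le xi 0; rewrite j0 addr0 u0 subr0; lra.
- move=> w.
  have h1 : L (j w) <= u w.
    have := hLQ' (j w); have := Q'le (j w) (- w); rewrite -jD addrN j0 (sublin0 hQ).
    rewrite (linrN _ hu); lra.
  have h2 : L (j (- w)) <= u (- w).
    have := hLQ' (j (- w)); have := Q'le (j (- w)) w; rewrite -jD addNr j0 (sublin0 hQ).
    rewrite (linrN _ hu); lra.
  move: h2; rewrite jN (linrN _ hL) (linrN _ hu); lra.
Qed.
End Ext.

Section XSec.
Variable R : realType.
Local Notation C := (Cplx R).

Definition md (c : C) : R := complex.Re `|c|.
Lemma mdE (c : C) : `|c| = (md c)%:C. Proof. exact: ge0c (normr_ge0 c). Qed.
Lemma md_ge0 c : 0 <= md c. Proof. by have := normr_ge0 c; rewrite mdE ler0c. Qed.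
Lemma mdM c d : md (c * d) = md c * md d.
Proof. by rewrite /md normrM !mdE -rcM. Qed.
Lemma mdD c d : md (c + d) <= md c + md d.
Proof. by have := ler_normD c d; rewrite !mdE -rcD lecR. Qed.
Lemma md0 : md 0 = 0. Proof. by rewrite /md normr0. Qed.
Lemma mdN c : md (- c) = md c. Proof. by rewrite /md normrN. Qed.
Lemma md_rc r : 0 <= r -> md (r%:C) = r.
Proof. by move=> r0; rewrite /md ger0_norm ?ler0c. Qed.
Lemma md_i : md 'i = 1.
Proof. by rewrite /md normc_def /= expr0n expr1n add0r sqrtr1. Qed.
Lemma md_Re c : `|complex.Re c| <= md c.
Proof. by have := normc_ge_Re c; rewrite mdE lecR. Qed.
Lemma md_Im c : `|complex.Im c| <= md c.
Proof.
have := md_Re (c * 'i); rewrite mdM md_i mulr1.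
by case: c => a b /=; rewrite !mulr0 !mulr1 sub0r normrN.
Qed.

Variable X : normedModType C.
Definition nrm (x : X) : R := complex.Re `|x|.
Lemma nrmE (x : X) : `|x| = (nrm x)%:C. Proof. exact: ge0c (normr_ge0 x). Qed.
Lemma nrm_ge0 x : 0 <= nrm x. Proof. by have := normr_ge0 x; rewrite nrmE ler0c. Qed.
Lemma nrmD x y : nrm (x + y) <= nrm x + nrm y.
Proof. by have := ler_normD x y; rewrite !nrmE -rcD lecR. Qed.
Lemma nrmZ (c : C) x : nrm (c *: x) = md c * nrm x.
Proof. by rewrite /nrm normrZ mdE nrmE -rcM. Qed.
Lemma nrmZr r x : 0 <= r -> nrm (r%:C *: x) = r * nrm x.
Proof. by move=> r0; rewrite nrmZ md_rc. Qed.
Lemma nrm0 : nrm 0 = 0. Proof. by rewrite /nrm normr0. Qed.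
Lemma nrm_eq0 x : nrm x = 0 -> x = 0.
Proof. by move=> h; apply/normr0_eq0; rewrite nrmE h rc0. Qed.

Lemma nrmN x : nrm (- x) = nrm x. Proof. by rewrite /nrm normrN. Qed.

Lemma nrm_sublin : sublin nrm.
Proof. by split; [exact: nrmD | move=> r x r0; exact: nrmZr]. Qed.

Definition ext (u : X -> R) := Fq nrm u /\
  (forall d, Fq nrm (fun x => u x + d x) -> Fq nrm (fun x => u x - d x) -> forall x, d x = 0).

Lemma linr_comb (f g : X -> R) a b : linr f -> linr g -> linr (fun x => a * f x + b * g x).
Proof.
move=> [fD fH] [gD gH]; split=> [x y|r x]; rewrite ?fD ?gD ?fH ?gH; lra.
Qed.

Lemma scale_bound (f : X -> R) s : linr f -> (forall x, nrm x <= 1 -> f x <= s) ->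
  forall x, f x <= s * nrm x.
Proof.
move=> hf h x.
have [e|ne] := eqVneq (nrm x) 0.
  by rewrite (nrm_eq0 e) (linr0 hf) nrm0 mulr0.
have n0 : 0 < nrm x by rewrite lt_neqAle eq_sym ne nrm_ge0.
have := h ((nrm x)^-1%:C *: x).
rewrite nrmZr ?invr_ge0 ?nrm_ge0 // mulVf // lexx; case: hf => _ -> /(_ isT) H.
by rewrite -ler_pdivrMr // mulrC.
Qed.

Lemma split_prop (u u1 : X -> R) : ext u -> linr u1 ->
  (forall x y, nrm x <= 1 -> nrm y <= 1 -> u1 x + (u y - u1 y) <= 1) ->
  exists c, forall x, u1 x = c * u x.
Proof.
move=> [[hu huN] hext] h1 hsp.
pose u2 := fun x => u x - u1 x.
have h2 : linr u2.
  have := linr_comb 1 (-1) hu h1; rewrite /u2 => H.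
  by split=> [x y|r x]; case: H => HD HH; [have := HD x y | have := HH r x]; lra.
pose B1 := [set x : X | nrm x <= 1].
have B10 : B1 0 by rewrite /B1 /= nrm0 ler01.
pose s1 := sup [set u1 x | x in B1].
pose s2 := sup [set u2 x | x in B1].
have b1 : forall x, B1 x -> u1 x <= 1.
  by move=> x hx; have := hsp x 0 hx B10; rewrite (linr0 hu) (linr0 h1); lra.
have b2 : forall y, B1 y -> u2 y <= 1.
  by move=> y hy; have := hsp 0 y B10 hy; rewrite (linr0 h1) /u2; lra.
have le1 : forall x, B1 x -> u1 x <= s1 by move=> x hx; exact: (le_sup_img b1 hx).
have le2 : forall x, B1 x -> u2 x <= s2 by move=> x hx; exact: (le_sup_img b2 hx).
have s1p : 0 <= s1 by have := le1 0 B10; rewrite (linr0 h1).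
have s2p : 0 <= s2 by have := le2 0 B10; rewrite (linr0 h2).
have s12 : s1 + s2 <= 1.
  have : s2 <= 1 - s1.
    apply: sup_le_img; first by exists 0.
    move=> y hy.
    have : s1 <= 1 - u2 y.
      apply: sup_le_img; first by exists 0.
      by move=> x hx; have := hsp x y hx hy; rewrite /u2; lra.
    lra.
  lra.
have g1 := scale_bound h1 le1.
have g2 := scale_bound h2 le2.
have [e1|ne1] := eqVneq s1 0.
  exists 0 => x; rewrite mul0r.
  have := g1 x; have := g1 (- x); rewrite (linrN _ h1) nrmN e1 !mul0r; lra.
have [e2|ne2] := eqVneq s2 0.
  exists 1 => x; rewrite mul1r.
  have := g2 x; have := g2 (- x); rewrite (linrN _ h2) nrmN e2 !mul0r /u2; lra.
have s1p' : 0 < s1 by rewrite lt_neqAle eq_sym ne1 s1p.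
have s2p' : 0 < s2 by rewrite lt_neqAle eq_sym ne2 s2p.
pose eps := Num.min s1 s2.
have ep : 0 < eps by rewrite lt_min s1p' s2p'.
have e1 : eps <= s1 by rewrite ge_min lexx.
have e2 : eps <= s2 by rewrite ge_min lexx orbT.
pose d := fun x => (eps / s1) * u1 x + (- (eps / s2)) * u2 x.
have hd : linr d by exact: linr_comb.
have key : forall x, d x = 0.
  apply: hext.
  - split; first by have := linr_comb 1 1 hu hd; rewrite /=; case=> HD HH;
      split=> [x y|r x]; [have := HD x y|have := HH r x]; lra.
    move=> x; rewrite /d.
    have ha : (1 + eps / s1) * u1 x <= (1 + eps / s1) * (s1 * nrm x).
      by rewrite ler_wpM2l // addr_ge0 // divr_ge0 // ltW.
    have hb : (1 - eps / s2) * u2 x <= (1 - eps / s2) * (s2 * nrm x).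
      rewrite ler_wpM2l // subr_ge0 ler_pdivrMr // mul1r //.
    have hn := nrm_ge0 x.
    have E1 : (1 + eps / s1) * (s1 * nrm x) = s1 * nrm x + eps * nrm x.
      by field; rewrite ne1.
    have E2 : (1 - eps / s2) * (s2 * nrm x) = s2 * nrm x - eps * nrm x.
      by field; rewrite ne2.
    have E3 : u x = u1 x + u2 x by rewrite /u2; lra.
    have hs : (s1 + s2) * nrm x <= nrm x by rewrite ler_piMl.
    rewrite E3; lra.
  - split; first by have := linr_comb 1 (-1) hu hd; rewrite /=; case=> HD HH;
      split=> [x y|r x]; [have := HD x y|have := HH r x]; lra.
    move=> x; rewrite /d.
    have ha : (1 - eps / s1) * u1 x <= (1 - eps / s1) * (s1 * nrm x).
      rewrite ler_wpM2l // subr_ge0 ler_pdivrMr // mul1r //.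
    have hb : (1 + eps / s2) * u2 x <= (1 + eps / s2) * (s2 * nrm x).
      by rewrite ler_wpM2l // addr_ge0 // divr_ge0 // ltW.
    have hn := nrm_ge0 x.
    have E1 : (1 - eps / s1) * (s1 * nrm x) = s1 * nrm x - eps * nrm x.
      by field; rewrite ne1.
    have E2 : (1 + eps / s2) * (s2 * nrm x) = s2 * nrm x + eps * nrm x.
      by field; rewrite ne2.
    have E3 : u x = u1 x + u2 x by rewrite /u2; lra.
    have hs : (s1 + s2) * nrm x <= nrm x by rewrite ler_piMl.
    rewrite E3; lra.
exists (s1 / (s1 + s2)) => x.
have := key x; rewrite /d /u2 => H.
have hs : s1 + s2 != 0 by rewrite lt0r_neq0 // addr_gt0.
have epn : eps != 0 by rewrite lt0r_neq0.
apply: (mulfI hs); rewrite mulrA mulrCA divff // mulr1.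
have : eps * (s2 * u1 x - s1 * (u x - u1 x)) = 0.
  by rewrite -[RHS](mulr0 (s1 * s2)) -H; field; rewrite ne1 ne2.
move/eqP; rewrite mulf_eq0 (negbTE epn) /= subr_eq0 => /eqP E.
lra.
Qed.
End XSec.

Section KSec.
Variable R : realType.
Local Notation C := (Cplx R).
Variable X : normedModType C.
Variables (K : Type) (ix : X -> K -> C).
Hypothesis ixlin : forall (c : C) (x y : X), ix (c *: x + y) = (fun k => c * ix x k + ix y k).
Hypothesis ixbd : forall x k, md (ix x k) <= nrm x.
Hypothesis ixatt : forall x (e : R), 0 < e -> exists k, nrm x - e < md (ix x k).

Lemma ix0 k : ix 0 k = 0.
Proof.
have := congr1 (fun f => f k) (ixlin 1 0 0); rewrite scale1r addr0 mul1r /= => h.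
by apply: (addrI (ix 0 k)); rewrite addr0 -h.
Qed.
Lemma ixD x y k : ix (x + y) k = ix x k + ix y k.
Proof. by have := congr1 (fun f => f k) (ixlin 1 x y); rewrite scale1r mul1r. Qed.
Lemma ixZ c x k : ix (c *: x) k = c * ix x k.
Proof. by have := congr1 (fun f => f k) (ixlin c x 0); rewrite addr0 ix0 addr0. Qed.
Lemma ixN x k : ix (- x) k = - ix x k.
Proof. by rewrite -scaleN1r ixZ mulN1r. Qed.

Variables (ha hb : K -> R).
Hypothesis ha0 : forall k, 0 <= ha k.
Hypothesis ha1 : forall k, ha k <= 1.
Hypothesis hb0 : forall k, 0 <= hb k.
Hypothesis hb1 : forall k, hb k <= 1.

Definition vv (xi : X * X * X) k : C :=
  ix xi.1.1 k + (ha k)%:C * ix xi.1.2 k + (hb k)%:C * ix xi.2 k.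

Lemma md_small (h : R) c : 0 <= h -> h <= 1 -> md (h%:C * c) <= md c.
Proof.
move=> h0 h1; rewrite mdM md_rc //; have := md_ge0 c.
by move=> c0; rewrite ler_piMl.
Qed.

Lemma vv_bd xi k : md (vv xi k) <= nrm xi.1.1 + nrm xi.1.2 + nrm xi.2.
Proof.
rewrite /vv; have := mdD (ix xi.1.1 k + (ha k)%:C * ix xi.1.2 k) ((hb k)%:C * ix xi.2 k).
have := mdD (ix xi.1.1 k) ((ha k)%:C * ix xi.1.2 k).
have := md_small (ix xi.1.2 k) (ha0 k) (ha1 k).
have := md_small (ix xi.2 k) (hb0 k) (hb1 k).
have := ixbd xi.1.1 k; have := ixbd xi.1.2 k; have := ixbd xi.2 k.
lra.
Qed.

Definition QQ xi := sup [set md (vv xi k) | k in [set: K]].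

Lemma K0 : exists k : K, True.
Proof. by have [k _] := ixatt 0 ltr01; exists k. Qed.

Lemma QQ_ge xi k : md (vv xi k) <= QQ xi.
Proof.
apply: (@le_sup_img R K setT (fun k => md (vv xi k)) (nrm xi.1.1 + nrm xi.1.2 + nrm xi.2) k) => //.
by move=> k' _; exact: vv_bd.
Qed.

Lemma QQ_le xi b : (forall k, md (vv xi k) <= b) -> QQ xi <= b.
Proof.
move=> h; have [k _] := K0.
by apply: sup_le_img; [exists k | move=> k' _; exact: h].
Qed.

Lemma vv_tr a b c k : vv (a, b, c) k = ix a k + (ha k)%:C * ix b k + (hb k)%:C * ix c k.
Proof. by []. Qed.

Lemma vvD xi xi' k : vv (xi + xi') k = vv xi k + vv xi' k.
Proof. rewrite /vv !ixD; ring. Qed.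

Lemma vvZ (r : R) xi k : vv (r%:C *: xi) k = r%:C * vv xi k.
Proof.
case: xi => [[a b] c].
rewrite (_ : r%:C *: (a, b, c) = (r%:C *: a, r%:C *: b, r%:C *: c)) //.
rewrite !vv_tr !ixZ; ring.
Qed.

Lemma vvN xi k : vv (- xi) k = - vv xi k.
Proof.
case: xi => [[a b] c].
rewrite (_ : - (a, b, c) = (- a, - b, - c)) //.
rewrite !vv_tr !ixN; ring.
Qed.

Lemma QQ_sublin : sublin QQ.
Proof.
split.
- move=> x y; apply: QQ_le => k; rewrite vvD.
  have := mdD (vv x k) (vv y k); have := QQ_ge x k; have := QQ_ge y k; lra.
- move=> r x r0.
  have [->|rpos] := eqVneq r 0.
    rewrite mul0r; apply/eqP; rewrite eq_le; apply/andP; split.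
      by apply: QQ_le => k; rewrite vvZ rc0 mul0r md0.
    by have := QQ_ge (0%:C *: x) (projT1 (cid K0)); rewrite vvZ rc0 mul0r md0.
  have r0' : 0 < r by rewrite lt_neqAle eq_sym rpos r0.
  apply/eqP; rewrite eq_le; apply/andP; split.
  + apply: QQ_le => k; rewrite vvZ mdM md_rc // ler_pM2l //; exact: QQ_ge.
  + have H : QQ x <= r^-1 * QQ (r%:C *: x).
      apply: QQ_le => k.
      have := QQ_ge (r%:C *: x) k; rewrite vvZ mdM md_rc // => h.
      rewrite -(mulKf rpos (md (vv x k))) ler_wpM2l // invr_ge0 //.
    by have := ler_wpM2l r0 H; rewrite mulrA divff // mul1r.
Qed.

Lemma QQ_j y : QQ (y, 0, 0) = nrm y.
Proof.
have e : forall k, vv (y, 0, 0) k = ix y k by move=> k; rewrite vv_tr !ix0 !mulr0 !addr0.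
apply/eqP; rewrite eq_le; apply/andP; split.
  by apply: QQ_le => k; rewrite e.
rewrite leNgt; apply/negP => H.
have hp : 0 < nrm y - QQ (y, 0, 0) by rewrite subr_gt0.
have [k hk] := ixatt y hp.
have := QQ_ge (y, 0, 0) k; rewrite e; lra.
Qed.

Lemma QQ_split1 x y : nrm x <= 1 -> nrm y <= 1 -> QQ (y, x - y, 0) <= 1.
Proof.
move=> hx hy; apply: QQ_le => k.
have -> : vv (y, x - y, 0) k = (ha k)%:C * ix x k + (1 - ha k)%:C * ix y k.
  by rewrite vv_tr ix0 ixD ixN mulr0 addr0 rcD rc1 rcN; ring.
have := mdD ((ha k)%:C * ix x k) ((1 - ha k)%:C * ix y k).
rewrite !mdM !md_rc ?subr_ge0 //.
have := ixbd x k; have := ixbd y k; have := ha0 k; have := ha1 k => h1 h0 hy' hx'.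
have : ha k * md (ix x k) <= ha k * 1 by rewrite ler_wpM2l //; lra.
have : (1 - ha k) * md (ix y k) <= (1 - ha k) * 1 by rewrite ler_wpM2l ?subr_ge0 //; lra.
lra.
Qed.

Lemma QQ_split2 x y : nrm x <= 1 -> nrm y <= 1 -> QQ (y, 0, x - y) <= 1.
Proof.
move=> hx hy; apply: QQ_le => k.
have -> : vv (y, 0, x - y) k = (hb k)%:C * ix x k + (1 - hb k)%:C * ix y k.
  by rewrite vv_tr ix0 ixD ixN mulr0 addr0 rcD rc1 rcN; ring.
have := mdD ((hb k)%:C * ix x k) ((1 - hb k)%:C * ix y k).
rewrite !mdM !md_rc ?subr_ge0 //.
have := ixbd x k; have := ixbd y k; have := hb0 k; have := hb1 k => h1 h0 hy' hx'.
have : hb k * md (ix x k) <= hb k * 1 by rewrite ler_wpM2l //; lra.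
have : (1 - hb k) * md (ix y k) <= (1 - hb k) * 1 by rewrite ler_wpM2l ?subr_ge0 //; lra.
lra.
Qed.

Lemma QQ_zero xi xi' : (forall k, vv xi k = vv xi' k) -> QQ (xi - xi') <= 0.
Proof. by move=> h; apply: QQ_le => k; rewrite vvD vvN h subrr md0. Qed.

End KSec.

Section Eigen.
Variable R : realType.
Local Notation C := (Cplx R).
Variable X : normedModType C.

Lemma tripD (a1 b1 c1 a2 b2 c2 : X) :
  (a1, b1, c1) + (a2, b2, c2) = (a1 + a2, b1 + b2, c1 + c2). Proof. by []. Qed.
Lemma tripZ (c : C) (a b d : X) : c *: (a, b, d) = (c *: a, c *: b, c *: d). Proof. by []. Qed.
Lemma tripN (a b d : X) : - (a, b, d) = (- a, - b, - d). Proof. by []. Qed.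

Variables (K : Type) (ix : X -> K -> C).
Hypothesis ixlin : forall (c : C) (x y : X), ix (c *: x + y) = (fun k => c * ix x k + ix y k).
Hypothesis ixbd : forall x k, md (ix x k) <= nrm x.
Hypothesis ixatt : forall x (e : R), 0 < e -> exists k, nrm x - e < md (ix x k).

Lemma eigen (u : X -> R) (T : X -> X) (f : K -> C) (M : R) :
  ext u -> 0 < M -> (forall k, md (f k) <= M) -> (forall x, ix (T x) = fun k => f k * ix x k) ->
  exists al be, forall x, u (T x) = al * u x + be * u ('i *: x).
Proof.
move=> hext M0 hfM hT.
have M0' : M != 0 by rewrite lt0r_neq0.
have M2 : 0 < 2 * M by rewrite mulr_gt0.
pose ha := fun k => (complex.Re (f k) + M) / (2 * M).
pose hb := fun k => (complex.Im (f k) + M) / (2 * M).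
have bRe : forall k, - M <= complex.Re (f k) <= M.
  by move=> k; rewrite -ler_norml; exact: le_trans (md_Re (f k)) (hfM k).
have bIm : forall k, - M <= complex.Im (f k) <= M.
  by move=> k; rewrite -ler_norml; exact: le_trans (md_Im (f k)) (hfM k).
have ha0 : forall k, 0 <= ha k.
  move=> k; rewrite /ha divr_ge0 ?(ltW M2) //; case/andP: (bRe k); lra.
have ha1 : forall k, ha k <= 1.
  move=> k; rewrite /ha ler_pdivrMr // mul1r; case/andP: (bRe k); lra.
have hb0 : forall k, 0 <= hb k.
  move=> k; rewrite /hb divr_ge0 ?(ltW M2) //; case/andP: (bIm k); lra.
have hb1 : forall k, hb k <= 1.
  move=> k; rewrite /hb ler_pdivrMr // mul1r; case/andP: (bIm k); lra.
pose Q := QQ ix ha hb.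
have hQ : sublin Q := QQ_sublin ixlin ixbd ixatt ha0 ha1 hb0 hb1.
pose j := fun w : X => (w, (0 : X), (0 : X)).
have jD : forall a b, j (a + b) = j a + j b by move=> a b; rewrite /j tripD !addr0.
have jZ : forall (r : R) a, j (r%:C *: a) = r%:C *: j a by move=> r a; rewrite /j tripZ !scaler0.
case: (hext) => [[hu huN] _].
have huQ : forall w, u w <= Q (j w).
  by move=> w; rewrite /Q /j (QQ_j ixlin ixbd ixatt ha0 ha1 hb0 hb1); exact: huN.
have [L [hL hLQ hLj]] := HB_ext jD jZ hQ hu huQ.
case: (hL) => LD LH.
pose u1 := fun x => L (0, x, 0).
pose u2 := fun x => L (0, 0, x).
have hu1 : linr u1.
  split=> [x y|r x]; rewrite /u1.
  - by rewrite -LD tripD addr0.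
  - by rewrite -LH tripZ !scaler0.
have hu2 : linr u2.
  split=> [x y|r x]; rewrite /u2.
  - by rewrite -LD tripD addr0.
  - by rewrite -LH tripZ !scaler0.
have dec1 : forall x y, u1 x + (u y - u1 y) = L (y, x - y, 0).
  move=> x y; rewrite -(hLj y) /u1 /j -(linrB _ _ hL) -LD tripN !tripD.
  by rewrite oppr0 !addr0 !add0r addrC.
have dec2 : forall x y, u2 x + (u y - u2 y) = L (y, 0, x - y).
  move=> x y; rewrite -(hLj y) /u2 /j -(linrB _ _ hL) -LD tripN !tripD.
  by rewrite oppr0 !addr0 !add0r addrC.
have [ca hca] : exists c, forall x, u1 x = c * u x.
  apply: split_prop => // x y hx hy; rewrite dec1.
  by apply: (le_trans (hLQ _)); apply: QQ_split1.
have [cb hcb] : exists c, forall x, u2 x = c * u x.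
  apply: split_prop => // x y hx hy; rewrite dec2.
  by apply: (le_trans (hLQ _)); apply: QQ_split2.
exists (- M + 2 * M * ca), (- M + 2 * M * cb) => x.
pose a0 := (- M)%:C *: x + (- M)%:C *: ('i *: x).
pose xi := (a0, (2 * M)%:C *: x, (2 * M)%:C *: ('i *: x)).
have hv : forall k, vv ix ha hb (j (T x)) k = vv ix ha hb xi k.
  move=> k; rewrite /j /xi !vv_tr hT /a0.
  rewrite !(ix0 ixlin) !(ixD ixlin) !(ixZ ixlin).
  have eRe : complex.Re (f k) = ha k * (2 * M) - M by rewrite /ha; field.
  have eIm : complex.Im (f k) = hb k * (2 * M) - M by rewrite /hb; field.
  have -> : f k = (ha k * (2 * M) - M)%:C + 'i * (hb k * (2 * M) - M)%:C.
    by rewrite -eRe -eIm; exact: complexE.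
  rewrite !rcD !rcM !rcN; ring.
have Lx : L (j (T x)) = L xi.
  apply/eqP; rewrite eq_le; apply/andP; split.
  - have := hLQ (j (T x) - xi); have : Q (j (T x) - xi) <= 0 by apply: QQ_zero.
    rewrite (linrB _ _ hL); rewrite /Q; lra.
  - have hv' : forall k, vv ix ha hb xi k = vv ix ha hb (j (T x)) k by move=> k; rewrite hv.
    have := hLQ (xi - j (T x)); have : Q (xi - j (T x)) <= 0 by apply: QQ_zero.
    rewrite (linrB _ _ hL); rewrite /Q; lra.
have exi : xi = j a0 + ((0, (2 * M)%:C *: x, 0) + (0, 0, (2 * M)%:C *: ('i *: x))).
  by rewrite /xi /j !tripD !addr0 !add0r.
rewrite -(hLj (T x)) Lx exi !LD (hLj a0).
have -> : L (0, (2 * M)%:C *: x, 0) = u1 ((2 * M)%:C *: x) by [].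
have -> : L (0, 0, (2 * M)%:C *: ('i *: x)) = u2 ((2 * M)%:C *: ('i *: x)) by [].
rewrite hca hcb /a0 (proj1 hu) !(proj2 hu); ring.
Qed.
End Eigen.

Section Conv.
Variable R : realType.
Variable X : completeNormedModType (Cplx R).

Lemma conv_iso (K : topologicalType) (i : X -> K -> Cplx R) : linear_isometry_CK i ->
  [/\ (forall (c : Cplx R) (x y : X), i (c *: x + y) = (fun k => c * i x k + i y k)),
      (forall x k, md (i x k) <= nrm x) &
      (forall x (e : R), 0 < e -> exists k, nrm x - e < md (i x k))].
Proof.
case=> _ hl hb ha; split => //.
- by move=> x k; have := hb x k; rewrite mdE nrmE lecR.
- move=> x e e0.
  have e0' : (0 : Cplx R) < e%:C by rewrite -rc0 ltcR.
  have [k hk] := ha x _ e0'; exists k.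
  by move: hk; rewrite mdE nrmE -rcN -rcD ltcR.
Qed.
End Conv.

Unset Implicit Arguments.
Theorem mainTheorem3 (R : realType) (A B X : completeNormedModType (Cplx R))
    (mulA : A -> A -> A) (oneA : A) (mulB : B -> B -> B) (oneB : B)
    (la : A -> X -> X) (ra : X -> B -> X) :
  unital_banach_algebra mulA oneA ->
  unital_banach_algebra mulB oneB ->
  left_banach_module mulA oneA la ->
  left_function_module mulA oneA la ->
  right_banach_module mulB oneB ra ->
  right_function_module mulB oneB ra ->
  forall (a : A) (x : X) (b : B), ra (la a x) b = la a (ra x b).
Proof.
move=> _ _ [_ hlx _ _ _] [K1 [_ _ [i1 [th [hi1 hth hact1]]]]]
  [_ hrx _ _ _] [K2 [_ _ [i2 [ps [hi2 hps hact2]]]]] a x b.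
have [l1 b1 a1] := conv_iso hi1.
have [l2 b2 a2] := conv_iso hi2.
case: hth => _ _ _ _ thb.
case: hps => _ _ _ _ psb.
have la0 : la a 0 = 0.
  have := hlx 1 a 0 0; rewrite !scale1r addr0 => h.
  by apply: (addrI (la a 0)); rewrite addr0 -h.
have laD : forall y y', la a (y + y') = la a y + la a y'.
  by move=> y y'; have := hlx 1 a y y'; rewrite !scale1r.
have laZ : forall (c : Cplx R) y, la a (c *: y) = c *: la a y.
  by move=> c y; have := hlx c a y 0; rewrite !addr0 la0 addr0.
have ra0 : ra 0 b = 0.
  have := hrx 1 b 0 0; rewrite !scale1r addr0 => h.
  by apply: (addrI (ra 0 b)); rewrite addr0 -h.
have raZ : forall (c : Cplx R) y, ra (c *: y) b = c *: ra y b.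
  by move=> c y; have := hrx c b y 0; rewrite !addr0 ra0 addr0.
apply/eqP; rewrite -subr_eq0; apply/eqP.
set z := ra (la a x) b - la a (ra x b).
have [//|zn0] := eqVneq z 0.
have [u [huB [hext huz]]] := exists_extreme z (@nrm_sublin R X).
have he : ext u by split.
have M1 : 0 < nrm a + 1 by have := nrm_ge0 a; lra.
have M2 : 0 < nrm b + 1 by have := nrm_ge0 b; lra.
have thb' : forall k, md (th a k) <= nrm a + 1.
  by move=> k; have := thb a k; rewrite mdE nrmE lecR; lra.
have psb' : forall k, md (ps b k) <= nrm b + 1.
  by move=> k; have := psb b k; rewrite mdE nrmE lecR; lra.
have hact2' : forall y, i2 (ra y b) = fun k => ps b k * i2 y k.
  by move=> y; rewrite hact2; apply: funext => k; rewrite mulrC.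
have [al [be hT]] := eigen l1 b1 a1 (T := la a) he M1 thb' (hact1 a).
have [ga [de hS]] := eigen l2 b2 a2 (T := fun y => ra y b) he M2 psb' hact2'.
have hu := huB.1.
have ii : forall y : X, 'i *: ('i *: y) = - y.
  by move=> y; rewrite scalerA -expr2 sqr_i scaleN1r.
have E : u z = 0.
  rewrite /z (linrB _ _ hu) hS hT -laZ hT ii (linrN _ hu).
  rewrite hT hS -raZ hS ii (linrN _ hu); ring.
have : 0 < nrm z.
  rewrite lt_neqAle nrm_ge0 andbT; apply/negP => /eqP H.
  by move/eqP: zn0; apply; apply: nrm_eq0.
by move=> H; have := lt_le_trans H huz; rewrite E ltxx.
Qed.
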